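(* Let $\{X,X_n;\,n\ge1\}$ be i.i.d. random variables with values in a real separable Banach space $\mathbf{B}$ and let $p>0$. Then for any $s>0$, $$\limsup_{n\to\infty}\frac1{\log n}\log\mathbb{P}\Big(\max_{1\le k\le n}\|X_k\|>sn^{1/p}\Big)=\min\Big\{0,\,-\frac{\bar\beta-p}{p}\Big\}$$ and $$\liminf_{n\to\infty}\frac1{\log n}\log\mathbb{P}\Big(\max_{1\le k\le n}\|X_k\|>sn^{1/p}\Big)=\min\Big\{0,\,-\frac{\underline\beta-p}{p}\Big\}.$$
   Context: $\bar\beta=-\limsup_{t\to\infty}\frac1t\log\mathbb{P}(\log\|X\|>t)$, $\underline\beta=-\liminf_{t\to\infty}\frac1t\log\mathbb{P}(\log\|X\|>t)$, both in $[0,\infty]$. Conventions: $\log0=-\infty$; $(\pm\infty+y)/x=\pm\infty$ for $x\in(0,\infty)$, $y\in\mathbb{R}$. *)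

(* Defs.v *)
From HB Require Import structures.
From mathcomp Require Import all_boot all_order all_algebra.
From mathcomp Require Import all_classical all_reals all_analysis.
Set Implicit Arguments. Unset Strict Implicit. Unset Printing Implicit Defensive.
Import Order.TTheory GRing.Theory Num.Def Num.Theory.
Import numFieldNormedType.Exports.
Local Open Scope classical_set_scope.
Local Open Scope ring_scope.

Definition borel_set (B : topologicalType) : set (set B) := <<s [set U | open U] >>.

Definition separable (B : topologicalType) : Prop :=
  exists D : set B, countable D /\ dense D.

Definition bRV d (T : measurableType d) (B : topologicalType) (X : T -> B) : Prop :=
  forall A, borel_set A -> measurable (X @^-1` A).

Local Open Scope ereal_scope.

Definition mutually_independent d (T : measurableType d) (R : realType)
  (P : probability T R) (B : topologicalType) (X : nat -> T -> B) : Prop :=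
  forall (s : seq nat) (A : nat -> set B), uniq s ->
    (forall i, i \in s -> borel_set (A i)) ->
    P (\bigcap_(i in [set` s]) (X i @^-1` A i)) = \prod_(i <- s) P (X i @^-1` A i).

Definition ident_distr d (T : measurableType d) (R : realType)
  (P : probability T R) (B : topologicalType) (X : nat -> T -> B) : Prop :=
  forall n A, borel_set A -> P (X n @^-1` A) = P (X 0%N @^-1` A).

Definition iid d (T : measurableType d) (R : realType)
  (P : probability T R) (B : topologicalType) (X : nat -> T -> B) : Prop :=
  (forall n, bRV (X n)) /\ mutually_independent P X /\ ident_distr P X.

Definition elog (R : realType) (x : \bar R) : \bar R :=
  match x with
  | r%:E => if (0 < r)%R then (ln r)%:E else -oo
  | +oo => +oo
  | -oo => -oo
  end.

Definition tailfun d (T : measurableType d) (R : realType) (P : probability T R)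
  (B : normedModType R) (Y : T -> B) (t : R) : \bar R :=
  (t^-1)%:E * elog (P [set w | t%:E < elog (`|Y w|)%:E]).

Definition beta_bar d (T : measurableType d) (R : realType) (P : probability T R)
  (B : normedModType R) (Y : T -> B) : \bar R :=
  - limf_esup (tailfun P Y) (pinfty_nbhs R).

Definition beta_under d (T : measurableType d) (R : realType) (P : probability T R)
  (B : normedModType R) (Y : T -> B) : \bar R :=
  - limf_einf (tailfun P Y) (pinfty_nbhs R).

Definition maxseq d (T : measurableType d) (R : realType) (P : probability T R)
  (B : normedModType R) (X : nat -> T -> B) (p s : R) (n : nat) : \bar R :=
  ((ln n%:R)^-1)%:E *
  elog (P [set w | (s * (n%:R `^ p^-1) < \big[Num.max/0%R]_(1 <= k < n.+1) `|X k w|)%R]).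

(* Main.v *)
Require Import Defs.
From HB Require Import structures.
From mathcomp Require Import all_boot all_order all_algebra.
From mathcomp Require Import all_classical all_reals all_analysis.
From mathcomp Require Import ring lra.
Set Implicit Arguments. Unset Strict Implicit. Unset Printing Implicit Defensive.
Import Order.TTheory GRing.Theory Num.Def Num.Theory.
Import numFieldNormedType.Exports.
Local Open Scope classical_set_scope.
Local Open Scope ring_scope.
Local Open Scope ereal_scope.

Section Chars.
Variable R : realType.

Lemma ele_of_real (x z : \bar R) : (forall a : R, z < a%:E -> x <= a%:E) -> x <= z.
Proof.
move=> H; case: z H => [r| |] H.
- apply/lee_addgt0Pr => e e0; apply: H; rewrite lte_fin ltrDl //.
- by rewrite leey.
- case: x H => [r| |] H.
  + by have := H (r - 1)%R (ltNyr _); rewrite lee_fin => h; exfalso; lra.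
  + by have := H 0%R (ltNyr _).
  + by [].
Qed.

Lemma ege_of_real (x z : \bar R) : (forall a : R, a%:E < z -> a%:E <= x) -> z <= x.
Proof.
move=> H; rewrite -leeN2 ; apply: ele_of_real => a Ha.
rewrite leeNl -EFinN; apply: H; by rewrite EFinN lteNl.
Qed.

Lemma seq_esup_le (u : nat -> \bar R) z :
  (forall a : R, z < a%:E -> exists N, forall n, (N <= n)%N -> u n <= a%:E) ->
  limn_esup u <= z.
Proof.
move=> H; apply: ele_of_real => a /H [N HN].
rewrite /limn_esup limf_esupE; apply: ge_ereal_inf.
exists (ereal_sup (u @` [set n | (N <= n)%N])).
  exists [set n | (N <= n)%N] => //; by exists N.
by apply/ereal_supP => _ [n Hn <-]; apply: HN.
Qed.

Lemma seq_esup_ge (u : nat -> \bar R) z :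
  (forall a : R, a%:E < z -> forall N, exists2 n, (N <= n)%N & a%:E <= u n) ->
  z <= limn_esup u.
Proof.
move=> H; apply: ege_of_real => a /H HN.
rewrite /limn_esup limf_esupE; apply/ereal_infP => _ [V [N _ HV] <-].
have [n Nn an] := HN N.
by apply: le_ereal_sup_tmp; exists (u n) => //; exists n => //; apply: HV.
Qed.

Lemma seq_einf_ge (u : nat -> \bar R) z :
  (forall a : R, a%:E < z -> exists N, forall n, (N <= n)%N -> a%:E <= u n) ->
  z <= limn_einf u.
Proof.
move=> H; rewrite /limn_einf leeNr; apply: seq_esup_le => a Ha.
have [N HN] : exists N, forall n, (N <= n)%N -> (- a)%:E <= u n.
  by apply: H; rewrite EFinN lteNl.
by exists N => n /HN; rewrite /= EFinN leeNl.
Qed.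

Lemma seq_einf_le (u : nat -> \bar R) z :
  (forall a : R, z < a%:E -> forall N, exists2 n, (N <= n)%N & u n <= a%:E) ->
  limn_einf u <= z.
Proof.
move=> H; rewrite /limn_einf leeNl; apply: seq_esup_ge => a Ha N.
have [n Nn Hn] := H (- a)%R ltac:(by rewrite EFinN lteNr) N.
by exists n => //=; rewrite leeNr -EFinN.
Qed.

Lemma fun_esup_lt (f : R -> \bar R) (a : \bar R) :
  limf_esup f (pinfty_nbhs R) < a -> exists M : R, forall t, (M < t)%R -> f t < a.
Proof.
rewrite limf_esupE => /ereal_inf_ltP [_ [V [M [_ HM]] <-] Ha].
exists M => t /HM Vt; apply: le_lt_trans Ha.
by apply: le_ereal_sup_tmp; exists (f t) => //; exists t.
Qed.

Lemma fun_esup_gt (f : R -> \bar R) (a : \bar R) :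
  a < limf_esup f (pinfty_nbhs R) -> forall M : R, exists2 t, (M < t)%R & a < f t.
Proof.
rewrite limf_esupE => Ha M.
have : a < ereal_sup (f @` [set t | (M < t)%R]).
  apply: (lt_le_trans Ha); apply: ereal_inf_lbound.
  exists [set t | (M < t)%R] => //; exists M; split => //; exact: num_real.
by move=> /ereal_sup_gtP [_ [t Mt <-] ft]; exists t.
Qed.

Lemma fun_einf_gt (f : R -> \bar R) (a : \bar R) :
  a < limf_einf f (pinfty_nbhs R) -> exists M : R, forall t, (M < t)%R -> a < f t.
Proof.
rewrite /limf_einf lteNr => /fun_esup_lt [M HM]; exists M => t /HM.
by rewrite /= lteN2.
Qed.

Lemma fun_einf_lt (f : R -> \bar R) (a : \bar R) :
  limf_einf f (pinfty_nbhs R) < a -> forall M : R, exists2 t, (M < t)%R & f t < a.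
Proof.
rewrite /limf_einf lteNl => /fun_esup_gt H M; have [t Mt Ht] := H M.
by exists t => //; move: Ht; rewrite lteNl oppeK.
Qed.

End Chars.
Section Arith.
Variable R : realType.
Local Open Scope ring_scope.

Lemma ln_large (K : R) : exists N, forall n, (N <= n)%N -> (2 <= n)%N /\ K < ln n%:R.
Proof.
exists (maxn 2 (truncn (expR K)).+1) => n; rewrite geq_max => /andP[n2 nK].
split => //.
have h1 : expR K < n%:R.
  apply: (lt_le_trans (truncnS_gt _)); by rewrite ler_nat.
by rewrite -ltr_expR lnK // posrE (lt_trans _ h1) // expR_gt0.
Qed.

Variables (a0 b : R).
Hypothesis b0 : 0 < b.
Let tn (n : nat) := a0 + b * ln n%:R.

Lemma floor_pick (N : nat) : exists M : R, forall t, M < t ->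
  exists m, [/\ (N <= m)%N, (2 <= m)%N, tn m <= t & t < tn m.+1].
Proof.
exists (a0 + b * ln (maxn N 2)%:R) => t Mt.
set x := expR ((t - a0) / b).
have x0 : 0 < x by rewrite expR_gt0.
have hK : (maxn N 2)%:R < x.
  rewrite /x -[X in X < _]lnK; last by rewrite posrE ltr0n leq_max orbT.
  rewrite ltr_expR ltr_pdivlMr // mulrC; move: Mt; lra.
have hm : (maxn N 2 <= truncn x)%N by rewrite truncn_ge_nat ?ltW // ltW.
move: hm; rewrite geq_max => /andP[hN h2].
exists (truncn x); split => //.
- rewrite /tn.
  have : ln (truncn x)%:R <= (t - a0) / b.
    rewrite -ler_expR lnK; last by rewrite posrE ltr0n (leq_trans _ h2).
    by rewrite truncn_le ltW.
  rewrite ler_pdivlMr // => h; nra.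
- rewrite /tn.
  have : (t - a0) / b < ln (truncn x).+1%:R.
    by rewrite -ltr_expR lnK ?posrE ?ltr0n // truncnS_gt.
  rewrite ltr_pdivrMr // => h; nra.
Qed.

Lemma tn_step m : (1 <= m)%N -> tn m.+1 <= tn m + b.
Proof.
move=> m1; rewrite /tn.
have m0 : 0 < m%:R :> R by rewrite ltr0n.
have e : (m.+1)%:R = m%:R * (1 + m%:R^-1) :> R.
  by rewrite mulrDr mulr1 mulfV ?gt_eqF // -natr1.
have hl : ln (m.+1)%:R <= ln m%:R + 1 :> R.
  have p1 : (m%:R : R) \in Num.pos by rewrite posrE.
  have p2 : (1 + (m%:R : R)^-1) \in Num.pos by rewrite posrE addr_gt0 // invr_gt0.
  rewrite e lnM //.
  rewrite lerD2l; apply: (le_trans (le_ln1Dx _)).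
    by rewrite (lt_le_trans (_ : -1 < 0)) ?ltrN10 // invr_ge0 ltW.
  by rewrite invf_le1 // ler1n.
have := ler_wpM2l (ltW b0) hl; lra.
Qed.


Lemma arithU (c a : R) : 1 + c * b < a -> exists K : R, forall l C, K < l ->
  C <= c * (a0 + b * l) + `|c| * b -> 1 + C / l <= a.
Proof.
move=> ha; set d := a - 1 - c * b.
have d0 : 0 < d by rewrite /d; lra.
exists ((`|c * a0| + `|c| * b) / d) => l C Kl HC.
have K0 : 0 <= (`|c * a0| + `|c| * b) / d.
  apply: divr_ge0; last exact: ltW.
  by apply: addr_ge0 => //; apply: mulr_ge0 => //; apply: ltW.
have l0 : 0 < l by apply: le_lt_trans Kl.
move: Kl; rewrite ltr_pdivrMr // => Kl.
have ca : c * a0 <= `|c * a0| by apply: ler_norm.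
rewrite -(ler_pM2r l0) mulrDl divfK ?gt_eqF // mul1r.
rewrite /d in Kl; nra.
Qed.

Lemma arithL (c a : R) : a < 0 -> a - 1 < c * b -> exists K : R, forall l C, K < l ->
  c * (a0 + b * l) - `|c| * b <= C -> a <= Num.min 0 (1 + C / l) - ln 2 / l.
Proof.
move=> a0' ha; set d := Num.min (- a) (1 + c * b - a).
have d0 : 0 < d by rewrite /d lt_min; apply/andP; split; lra.
have l2 : 0 < ln 2 :> R by apply: ln_gt0; rewrite ltr1n.
have dle1 : d <= - a by rewrite /d ge_min lexx.
have dle2 : d <= 1 + c * b - a by rewrite /d ge_min lexx orbT.
exists ((`|c * a0| + `|c| * b + ln 2) / d) => l C Kl HC.
have K0 : 0 <= (`|c * a0| + `|c| * b + ln 2) / d.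
  apply: divr_ge0; last exact: ltW.
  apply: addr_ge0; last exact: ltW.
  by apply: addr_ge0 => //; apply: mulr_ge0 => //; apply: ltW.
have l0 : 0 < l by apply: le_lt_trans Kl.
move: Kl; rewrite ltr_pdivrMr // => Kl.
have ca : - `|c * a0| <= c * a0 by rewrite lerNl -normrN ler_norm.
have h1 := ler_wpM2r (ltW l0) dle1.
have h2 := ler_wpM2r (ltW l0) dle2.
have n1 : 0 <= `|c * a0| by [].
have n2 : 0 <= `|c| * b by apply: mulr_ge0 => //; apply: ltW.
rewrite lerBrDr le_min; apply/andP; split.
- rewrite -(ler_pM2r l0) mulrDl divfK ?gt_eqF // mul0r; nra.
- rewrite -(ler_pM2r l0) !mulrDl !divfK ?gt_eqF // mul1r; nra.
Qed.

End Arith.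

Section Transfer.
Variable R : realType.
Variables (h : R -> \bar R) (a0 p : R) (g : nat -> \bar R).
Hypothesis p0 : (0 < p)%R.
Hypothesis hmono : forall x y : R, (x <= y)%R -> h y <= h x.
Hypothesis H0 : forall n, g n <= 0.
Hypothesis HU : forall n c, (2 <= n)%N -> h (a0 + p^-1 * ln n%:R)%R <= c%:E ->
  g n <= (1 + c / ln n%:R)%:E.
Hypothesis HL : forall n c, (2 <= n)%N -> c%:E <= h (a0 + p^-1 * ln n%:R)%R ->
  (Num.min 0 (1 + c / ln n%:R) - ln 2 / ln n%:R)%:E <= g n.

Let b := (p^-1)%R.
Let b0 : (0 < b)%R. Proof. by rewrite /b invr_gt0. Qed.
Let f := fun t : R => (t^-1)%:E * h t.

Lemma zexpr (L : \bar R) : - ((- L - p%:E) * (p^-1)%:E) = L * b%:E + 1.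
Proof.
case: L => [r| |] /=.
  rewrite -EFinM -EFinD; congr EFin.
  rewrite /b; field; exact: lt0r_neq0.
- by rewrite gt0_mulNye // gt0_mulye.
- by rewrite gt0_mulye // gt0_mulNye.
Qed.

Lemma pick_lt (L : \bar R) (x : R) : L * b%:E + 1 < x%:E ->
  exists c : R, L < c%:E /\ (1 + c * b < x)%R.
Proof.
case: L => [r| |] /=.
- rewrite -EFinM -EFinD lte_fin => H.
  exists ((r + (x - 1) / b) / 2)%R; split.
  + rewrite lte_fin; rewrite ltr_pdivlMr // -ltrBlDl ltr_pdivlMr //; lra.
  + have e : ((r + (x - 1) / b) / 2 * b = (r * b + (x - 1)) / 2)%R.
      by field; exact: lt0r_neq0.
    rewrite e; lra.
- by rewrite gt0_mulye.
- move=> _; exists ((x - 1) / b - 1)%R; split; first exact: ltNyr.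
  have e : (((x - 1) / b - 1) * b = x - 1 - b)%R by field; exact: lt0r_neq0.
  rewrite e; have := b0; lra.
Qed.

Lemma pick_gt (L : \bar R) (x : R) : x%:E < L * b%:E + 1 ->
  exists c : R, c%:E < L /\ (x - 1 < c * b)%R.
Proof.
case: L => [r| |] /=.
- rewrite -EFinM -EFinD lte_fin => H.
  exists ((r + (x - 1) / b) / 2)%R; split.
  + rewrite lte_fin; rewrite ltr_pdivrMr // -ltrBrDl ltr_pdivrMr //; lra.
  + have e : ((r + (x - 1) / b) / 2 * b = (r * b + (x - 1)) / 2)%R.
      by field; exact: lt0r_neq0.
    rewrite e; lra.
- move=> _; exists ((x - 1) / b + 1)%R; split; first exact: ltry.
  have e : (((x - 1) / b + 1) * b = x - 1 + b)%R by field; exact: lt0r_neq0.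
  rewrite e; have := b0; lra.
- by rewrite gt0_mulNye.
Qed.

Lemma fle (t c : R) : (0 < t)%R -> f t < c%:E -> h t <= (c * t)%:E.
Proof.
rewrite /f => t0; case: (h t) => [r| |] //=.
- rewrite -EFinM lte_fin lee_fin ltr_pdivrMl // => H; rewrite mulrC; exact: ltW.
- by rewrite gt0_muley ?lte_fin ?invr_gt0.
- by move=> _; exact: leNye.
Qed.

Lemma fge (t c : R) : (0 < t)%R -> c%:E < f t -> (c * t)%:E <= h t.
Proof.
rewrite /f => t0; case: (h t) => [r| |] //=.
- rewrite -EFinM lte_fin lee_fin ltr_pdivlMl // => H; rewrite mulrC; exact: ltW.
- by move=> _; exact: leey.
- by rewrite gt0_muleNy ?lte_fin ?invr_gt0.
Qed.

Lemma absbound (c d : R) : (0 <= d <= b)%R -> (- (`|c| * b) <= c * d <= `|c| * b)%R.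
Proof.
move=> /andP[d0 db].
have : (`|c * d| <= `|c| * b)%R.
  by rewrite normrM (ger0_norm d0) ler_wpM2l.
by rewrite ler_norml.
Qed.

Lemma tn_big (M : R) (l : R) : ((Num.max M 0 - a0) / b < l)%R ->
  (M < a0 + b * l)%R /\ (0 < a0 + b * l)%R.
Proof.
have hb := b0; rewrite ltr_pdivrMr // => H.
have m1 : (M <= Num.max M 0)%R by rewrite le_max lexx.
have m2 : (0 <= Num.max M 0)%R by rewrite le_max lexx orbT.
split; nra.
Qed.

Lemma transfer_sup :
  limn_esup g = mine 0 (- ((- limf_esup f (pinfty_nbhs R) - p%:E) * (p^-1)%:E)).
Proof.
rewrite zexpr; set L := limf_esup f _.
have hb := b0.
apply/eqP; rewrite eq_le; apply/andP; split.
- apply: seq_esup_le => a Ha.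
  have [apos|aneg] := ltP 0%R a.
    by exists 0%N => n _; apply: (le_trans (H0 n)); rewrite lee_fin ltW.
  have HL1 : L * b%:E + 1 < a%:E.
    move: Ha; rewrite gt_min => /orP[|//]; by rewrite lte_fin ltNge aneg.
  have [c [Lc hc]] := pick_lt HL1.
  have [M HM] := fun_esup_lt Lc.
  have [K HK] := arithU a0 b0 hc.
  have [N HN] := ln_large (Num.max K ((Num.max M 0 - a0) / b))%R.
  exists N => n /HN [n2].
  rewrite gt_max => /andP[Kl Ml].
  have [tM t0] := tn_big Ml.
  have := fle t0 (HM _ tM) => hh.
  apply: le_trans (HU n2 hh) _; rewrite lee_fin; apply: HK Kl _.
  have : (0 <= `|c| * b)%R by apply: mulr_ge0 => //; apply: ltW.
  lra.
- apply: seq_esup_ge => a Ha N.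
  move: Ha; rewrite lt_min => /andP[]; rewrite lte_fin => aneg Ha.
  have [c [cL hc]] := pick_gt Ha.
  have [K HK] := arithL a0 b0 aneg hc.
  have [N1 HN1] := ln_large K.
  have [M HM] := floor_pick a0 b0 (maxn N N1).
  have [t Mt ct] := fun_esup_gt cL (Num.max M 0)%R.
  move: Mt; rewrite gt_max => /andP[Mt t0].
  have [m [hm m2 tm tm1]] := HM t Mt.
  move: hm; rewrite geq_max => /andP[Nm N1m].
  exists m => //.
  have [_ Kl] := HN1 m N1m.
  have hct := fge t0 ct.
  have hh : (c * t)%:E <= h (a0 + p^-1 * ln m%:R) := le_trans hct (hmono tm).
  apply: le_trans (HL m2 hh); rewrite lee_fin; apply: HK Kl _.
  have st := tn_step a0 b0 (ltnW m2).
  have /andP[lo hi] := @absbound c (t - (a0 + b * ln m%:R)) ltac:(apply/andP; split; lra).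
  lra.
Qed.

Lemma transfer_inf :
  limn_einf g = mine 0 (- ((- limf_einf f (pinfty_nbhs R) - p%:E) * (p^-1)%:E)).
Proof.
rewrite zexpr; set L := limf_einf f _.
have hb := b0.
apply/eqP; rewrite eq_le; apply/andP; split.
- apply: seq_einf_le => a Ha N.
  have [apos|aneg] := ltP 0%R a.
    by exists N => //; apply: (le_trans (H0 N)); rewrite lee_fin ltW.
  have HL1 : L * b%:E + 1 < a%:E.
    move: Ha; rewrite gt_min => /orP[|//]; by rewrite lte_fin ltNge aneg.
  have [c [Lc hc]] := pick_lt HL1.
  have [K HK] := arithU a0 b0 hc.
  have [N1 HN1] := ln_large K.
  have [M HM] := floor_pick a0 b0 (maxn N N1).
  have [t Mt ct] := fun_einf_lt Lc (Num.max M 0)%R.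
  move: Mt; rewrite gt_max => /andP[Mt t0].
  have [m [hm m2 tm tm1]] := HM t Mt.
  move: hm; rewrite geq_max => /andP[Nm N1m].
  exists m.+1; first exact: leqW.
  have [m2' Kl] := HN1 m.+1 (leqW N1m).
  have hct := fle t0 ct.
  have hh : h (a0 + p^-1 * ln m.+1%:R) <= (c * t)%:E.
    exact: le_trans (hmono (ltW tm1)) hct.
  apply: le_trans (HU m2' hh) _; rewrite lee_fin; apply: HK Kl _.
  have st := tn_step a0 b0 (ltnW m2).
  have /andP[lo hi] := @absbound c (a0 + b * ln m.+1%:R - t) ltac:(apply/andP; split; lra).
  lra.
- apply: seq_einf_ge => a Ha.
  move: Ha; rewrite lt_min => /andP[]; rewrite lte_fin => aneg Ha.
  have [c [cL hc]] := pick_gt Ha.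
  have [M HM] := fun_einf_gt cL.
  have [K HK] := arithL a0 b0 aneg hc.
  have [N HN] := ln_large (Num.max K ((Num.max M 0 - a0) / b))%R.
  exists N => n /HN [n2].
  rewrite gt_max => /andP[Kl Ml].
  have [tM t0] := tn_big Ml.
  have := fge t0 (HM _ tM) => hh.
  apply: le_trans (HL n2 hh); rewrite lee_fin; apply: HK Kl _.
  have : (0 <= `|c| * b)%R by apply: mulr_ge0 => //; apply: ltW.
  lra.
Qed.

End Transfer.

Section Real.
Variable R : realType.
Local Open Scope ring_scope.

Lemma bern_up (Q : R) (n : nat) : 0 <= Q <= 1 -> 1 - n%:R * Q <= (1 - Q) ^+ n.
Proof.
move=> /andP[Q0 Q1]; elim: n => [|n IH]; first by rewrite mul0r subr0 expr0.
rewrite exprS -natr1.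
have x0 : 0 <= (1 - Q) ^+ n by apply: exprn_ge0; lra.
have h1 : 0 <= 1 - Q by lra.
have := ler_wpM2l h1 IH.
have : 0 <= n%:R * Q * Q by apply: mulr_ge0 => //; apply: mulr_ge0.
nra.
Qed.

Lemma bern_lo (Q : R) (n : nat) : 0 <= Q <= 1 -> (1 - Q) ^+ n * (1 + n%:R * Q) <= 1.
Proof.
move=> /andP[Q0 Q1]; elim: n => [|n IH]; first by rewrite mul0r addr0 expr0 mulr1.
rewrite exprS -natr1.
have x0 : 0 <= (1 - Q) ^+ n by apply: exprn_ge0; lra.
have : 0 <= (1 - Q) ^+ n * (n%:R + 1) * (Q * Q).
  by apply: mulr_ge0; [apply: mulr_ge0 => //; lra | apply: mulr_ge0].
nra.
Qed.

Lemma elogE (r : R) : elog r%:E = if 0 < r then (ln r)%:E else -oo%E.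
Proof. by []. Qed.

Lemma key_up (n : nat) (Q C : R) : (2 <= n)%N -> 0 <= Q <= 1 ->
  (elog Q%:E <= C%:E)%E ->
  ((ln n%:R)^-1%:E * elog (1 - (1 - Q) ^+ n)%:E <= (1 + C / ln n%:R)%:E)%E.
Proof.
move=> n2 /andP[Q0 Q1] HC.
have l0 : 0 < ln n%:R :> R by apply: ln_gt0; rewrite ltr1n.
have n0 : 0 < n%:R :> R by rewrite ltr0n (leq_trans _ n2).
rewrite elogE; case: ifPn => [M0|]; last first.
  by move=> _; rewrite gt0_muleNy ?lte_fin ?invr_gt0 // leNye.
have hb := @bern_up Q n ltac:(apply/andP; split => //).
have Qp : 0 < Q.
  rewrite lt_neqAle Q0 andbT; apply/eqP => Q00; move: M0.
  by rewrite -Q00 subr0 expr1n subrr ltxx.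
move: HC; rewrite elogE Qp lee_fin => HC.
have hM : 1 - (1 - Q) ^+ n <= n%:R * Q by lra.
have hl : ln (1 - (1 - Q) ^+ n) <= ln n%:R + ln Q.
  rewrite -lnM ?posrE // ler_ln // posrE mulr_gt0 //.
rewrite -EFinM lee_fin mulrC ler_pdivrMr // mulrDl divfK ?gt_eqF // mul1r.
lra.
Qed.

Lemma key_lo (n : nat) (Q C : R) : (2 <= n)%N -> 0 <= Q <= 1 ->
  (C%:E <= elog Q%:E)%E ->
  ((Num.min 0 (1 + C / ln n%:R) - ln 2 / ln n%:R)%:E <=
    (ln n%:R)^-1%:E * elog (1 - (1 - Q) ^+ n)%:E)%E.
Proof.
move=> n2 /andP[Q0 Q1] HC.
have l0 : 0 < ln n%:R :> R by apply: ln_gt0; rewrite ltr1n.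
have n0 : 0 < n%:R :> R by rewrite ltr0n (leq_trans _ n2).
have l2 : 0 < ln 2 :> R by apply: ln_gt0; rewrite ltr1n.
move: HC; rewrite elogE; case: ifPn => [Qp|]; last by rewrite leeNy_eq.
rewrite lee_fin => HC.
have hb := @bern_lo Q n ltac:(apply/andP; split => //).
set y := n%:R * Q in hb.
have y0 : 0 < y by rewrite /y mulr_gt0.
set x := (1 - Q) ^+ n in hb *.
have hMy : y <= (1 - x) * (1 + y) by lra.
have hy : ln y = ln n%:R + ln Q by rewrite /y lnM ?posrE.
have M0 : 0 < 1 - x by have := mulr_gt0 y0 y0; nra.
have hlow : Num.min 0 (ln y) - ln 2 <= ln (1 - x).
  have [y1|y1] := leP y 1.
    have e2 : ln y - ln 2 = ln (y / 2) by rewrite ln_div ?posrE.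
    have : ln (y / 2) <= ln (1 - x).
      rewrite ler_ln ?posrE ?divr_gt0 //; nra.
    have : Num.min 0 (ln y) <= ln y by rewrite ge_min lexx orbT.
    lra.
  -     have e2 : - ln 2 = ln (2^-1) :> R by rewrite lnV ?posrE.
    have : ln (2^-1) <= ln (1 - x).
      rewrite ler_ln ?posrE ?invr_gt0 //; nra.
    have : Num.min 0 (ln y) <= 0 by rewrite ge_min lexx.
    lra.
rewrite elogE M0 -EFinM lee_fin [X in _ <= X]mulrC ler_pdivlMr // mulrDl.
have eC : (1 + C / ln n%:R) * ln n%:R = ln n%:R + C by rewrite mulrDl divfK ?gt_eqF // mul1r.
have e2 : ln 2 / ln n%:R * ln n%:R = ln 2 :> R by rewrite divfK ?gt_eqF.
rewrite mulNr e2.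
have m1 : Num.min 0 (1 + C / ln n%:R) <= 0 by rewrite ge_min lexx.
have m2 : Num.min 0 (1 + C / ln n%:R) <= 1 + C / ln n%:R by rewrite ge_min lexx orbT.
have A := ler_wpM2r (ltW l0) m1.
have B := ler_wpM2r (ltW l0) m2.
rewrite mul0r in A; rewrite eC in B.
have : Num.min 0 (1 + C / ln n%:R) * ln n%:R <= Num.min 0 (ln y).
  rewrite le_min A /= hy; lra.
lra.
Qed.

End Real.

Section Main.
Variables (R : realType) (d : measure_display) (T : measurableType d)
  (P : probability T R) (B : completeNormedModType R) (X : nat -> T -> B).
Hypothesis hX : iid P X.

Lemma borel_gt (c : R) : borel_set [set x : B | (c < `|x|)%R].
Proof.
apply: sub_gen_smallest.
apply: (@open_comp _ _ (fun x : B => `|x|%R) [set y : R | (c < y)%R]).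
  by move=> x _; exact: norm_continuous.
exact: open_gt.
Qed.

Lemma borel_le (c : R) : borel_set [set x : B | (`|x| <= c)%R].
Proof.
have -> : [set x : B | (`|x| <= c)%R] = ~` [set x : B | (c < `|x|)%R].
  by apply/seteqP; split => x /=; rewrite leNgt => /negP.
rewrite /borel_set; apply: sigma_algebraC; exact: borel_gt.
Qed.

Lemma mgt k (c : R) : measurable (X k @^-1` [set x : B | (c < `|x|)%R]).
Proof. exact: hX.1 k _ (borel_gt c). Qed.

Lemma mle k (c : R) : measurable (X k @^-1` [set x : B | (`|x| <= c)%R]).
Proof. exact: hX.1 k _ (borel_le c). Qed.

Definition Q (c : R) : R := fine (P (X 0%N @^-1` [set x : B | (c < `|x|)%R])).

Lemma PE (c : R) : P (X 0%N @^-1` [set x : B | (c < `|x|)%R]) = (Q c)%:E.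
Proof. by rewrite /Q fineK // (fin_num_measure P _ (mgt 0 c)). Qed.

Lemma Q01 (c : R) : (0 <= Q c <= 1)%R.
Proof.
apply/andP; split; rewrite -lee_fin -PE //.
exact: probability_le1 (mgt 0 c).
Qed.


Lemma prod_constE (a : R) m n : \prod_(i <- iota m n) a%:E = (a ^+ n)%:E.
Proof.
elim: n m => [|n IH] m; first by rewrite big_nil expr0.
by rewrite /= big_cons IH exprS EFinM.
Qed.

Lemma Pmax (n : nat) (c : R) : (0 <= c)%R ->
  P [set w | (c < \big[Num.max/0%R]_(1 <= k < n.+1) `|X k w|)%R] =
  (1 - (1 - Q c) ^+ n)%:E.
Proof.
move=> c0.
have ii : index_iota 1 n.+1 = iota 1 n by rewrite /index_iota subn1.
set A := [set x : B | (`|x| <= c)%R].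
have hS : [set w | (c < \big[Num.max/0%R]_(1 <= k < n.+1) `|X k w|)%R] =
    ~` \bigcap_(i in [set` iota 1 n]) (X i @^-1` A).
  apply/seteqP; split => w /=.
  - move=> Hw Hall; move: Hw; rewrite ltNge => /negP; apply.
    rewrite ii big_seq; apply: bigmax_le => // k hk.
  - move=> Hnot; rewrite ltNge; apply/negP => Hle; apply: Hnot => k /= hk.
    apply: le_trans Hle; rewrite ii.
    exact: (@le_bigmax_seq _ _ _ _ _ k xpredT (fun i => `|X i w|%R)). 
rewrite hS probability_setC; last first.
  by apply: bigcap_measurableType => k _; exact: mle.
rewrite hX.2.1; last 2 first.
- exact: iota_uniq.
- by move=> i _; exact: borel_le.
have e : forall i, P (X i @^-1` A) = (1 - Q c)%:E.
  move=> i; rewrite hX.2.2; last exact: borel_le.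
  have -> : X 0%N @^-1` A = ~` (X 0%N @^-1` [set x : B | (c < `|x|)%R]).
    by apply/seteqP; split => x /=; rewrite /A /= leNgt => /negP.
  by rewrite probability_setC ?PE //; exact: mgt.
under eq_bigr => i _ do rewrite e.
by rewrite prod_constE -EFinB.
Qed.


Definition hh (t : R) : \bar R := elog (P [set w | t%:E < elog (`|X 0%N w|)%:E]).

Lemma hset (t : R) : [set w | t%:E < elog (`|X 0%N w|)%:E] =
  X 0%N @^-1` [set x : B | (expR t < `|x|)%R].
Proof.
apply/seteqP; split => w /=; case: ifPn => [h0|h0].
- have e : expR (ln `|X 0%N w|) = `|X 0%N w|%R by rewrite lnK // posrE.
  by rewrite lte_fin => h1; rewrite -e ltr_expR.
- by rewrite ltNge leNye.
- have e : expR (ln `|X 0%N w|) = `|X 0%N w|%R by rewrite lnK // posrE.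
  by rewrite lte_fin -{1}e ltr_expR.
- by move=> h1; exfalso; move: h0; rewrite (lt_trans _ h1) // expR_gt0.
Qed.

Lemma hE (t : R) : hh t = elog (Q (expR t))%:E.
Proof. by rewrite /hh hset PE. Qed.

Lemma elog_le (r r' : R) : (r <= r')%R -> elog r%:E <= elog r'%:E.
Proof.
move=> rr; rewrite !elogE; case: ifPn => [r0|_]; last exact: leNye.
by rewrite (lt_le_trans r0 rr) lee_fin ler_ln // posrE (lt_le_trans r0 rr).
Qed.

Lemma Qmono (c c' : R) : (c <= c')%R -> (Q c' <= Q c)%R.
Proof.
move=> cc; rewrite -lee_fin -!PE; apply: le_measure; rewrite ?inE; try exact: mgt.
by move=> w /= h; apply: le_lt_trans h.
Qed.

Lemma hmono (x y : R) : (x <= y)%R -> hh y <= hh x.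
Proof. by move=> xy; rewrite !hE; apply/elog_le/Qmono; rewrite ler_expR. Qed.

End Main.

Unset Implicit Arguments.


Theorem lemma3p4 (R : realType) (d : measure_display) (T : measurableType d)
  (P : probability T R) (B : completeNormedModType R) (X : nat -> T -> B)
  (p : R) :
  separable B -> iid P X -> (0 < p)%R ->
  forall s : R, (0 < s)%R ->
    limn_esup (maxseq P X p s)
      = mine 0 (- ((beta_bar P (X 0%N) - p%:E) * (p^-1)%:E))
    /\ limn_einf (maxseq P X p s)
      = mine 0 (- ((beta_under P (X 0%N) - p%:E) * (p^-1)%:E)).
Proof.
move=> _ hX p0 s s0.
set g := maxseq P X p s.
have tnE : forall n, (1 <= n)%N ->
    expR (ln s + p^-1 * ln n%:R) = (s * n%:R `^ p^-1)%R.
  move=> n n1; rewrite expRD lnK ?posrE // /powR gt_eqF ?ltr0n //.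
have c0 : forall n : nat, (0 <= s * n%:R `^ p^-1)%R.
  by move=> n; apply: mulr_ge0; [exact: ltW | exact: powR_ge0].
have H0 : forall n, g n <= 0.
  move=> n; rewrite /g /maxseq (Pmax hX _ (c0 n)); apply: mule_ge0_le0.
    rewrite lee_fin invr_ge0; case: n => [|n]; first by rewrite ln0.
    by apply: ln_ge0; rewrite ler1n.
  rewrite elogE; case: ifPn => _; last exact: leNye.
  rewrite lee_fin; apply: ln_le0; rewrite lerBlDr lerDl; apply: exprn_ge0.
  by have /andP[_ ?] := Q01 hX (s * n%:R `^ p^-1); rewrite subr_ge0.
have HU : forall n c, (2 <= n)%N -> hh P X (ln s + p^-1 * ln n%:R)%R <= c%:E ->
    g n <= (1 + c / ln n%:R)%:E.
  move=> n c n2; rewrite hE // tnE ?(ltnW n2) // => hle.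
  rewrite /g /maxseq (Pmax hX _ (c0 n)).
  exact: key_up n2 (Q01 hX _) hle.
have HL : forall n c, (2 <= n)%N -> c%:E <= hh P X (ln s + p^-1 * ln n%:R)%R ->
    (Num.min 0 (1 + c / ln n%:R) - ln 2 / ln n%:R)%:E <= g n.
  move=> n c n2; rewrite hE // tnE ?(ltnW n2) // => hle.
  rewrite /g /maxseq (Pmax hX _ (c0 n)).
  exact: key_lo n2 (Q01 hX _) hle.
split.
- exact: (transfer_sup (h := hh P X) (a0 := ln s) p0 (hmono hX) H0 HU HL).
- exact: (transfer_inf (h := hh P X) (a0 := ln s) p0 (hmono hX) H0 HU HL).
Qed.
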